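(* Assume $\alpha=\beta\ge1$ and $p\in\mathbb R\setminus\{0,1\}$. Let $\mathbf U=(U,V)$ with multiplier $\Lambda$ be the similarity profile and let $\mathbf u=(u,v)$ be a solution of the scaled system with $\rho=u/U$, $\zeta=v/V$. Then $\frac{\mathrm d}{\mathrm d\tau}\mathcal E_p(\mathbf u(\tau)|\mathbf U)=-\mathcal D_p(\rho,\zeta)$ with $$\mathcal D_p(\rho,\zeta)=\mathcal I_{p,\mathrm{Fisher}}(\rho,\zeta)+\tfrac12\,\mathcal E_p(\mathbf u|\mathbf U)-\mathcal I_{p,\Lambda}(\rho,\zeta)+e^\tau\mathcal D_{p,\mathrm{react}}(\rho,\zeta),$$ where $\mathcal D_{p,\mathrm{react}}(\rho,\zeta):=\int_{\mathbb R}kU^\alpha\frac{\alpha}{p-1}\big(\zeta^{p-1}-\rho^{p-1}\big)\big(\zeta^\alpha-\rho^\alpha\big)\mathrm dy\ge0$, $\mathcal I_{p,\mathrm{Fisher}}(\rho,\zeta):=\int_{\mathbb R}\big(d_1U\rho^{p-2}\rho_y^2+d_2V\zeta^{p-2}\zeta_y^2\big)\mathrm dy\ge0$, and $\mathcal I_{p,\Lambda}(\rho,\zeta):=\int_{\mathbb R}\frac1p\big(\zeta^p-\rho^p\big)\alpha\Lambda\,\mathrm dy$.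
   Context: Fix $d_1,d_2,k>0$, real stoichiometric coefficients $\alpha,\beta\ge1$ and $A_-,A_+>0$. The similarity profile is a triple $(U,V,\Lambda)$ with $U,V\in\mathrm C^2(\mathbb R)$ positive, bounded and bounded away from $0$, $\Lambda:\mathbb R\to\mathbb R$, satisfying $d_1U''+\tfrac y2U'+\alpha\Lambda=0$, $d_2V''+\tfrac y2V'-\beta\Lambda=0$, $U^\alpha=V^\beta$ on $\mathbb R$, and $U(\pm\infty)=A_\pm^\beta$, $V(\pm\infty)=A_\pm^\alpha$. The scaled system is $u_\tau=d_1u_{yy}+\tfrac y2u_y+e^\tau\alpha k(v^\beta-u^\alpha)$, $v_\tau=d_2v_{yy}+\tfrac y2v_y-e^\tau\beta k(v^\beta-u^\alpha)$ for $\tau>0$, $y\in\mathbb R$, with $(u,v)(\tau,\pm\infty)=(A_\pm^\beta,A_\pm^\alpha)$. A ''solution'' is a positive classical solution for which the relative entropy is finite and differentiable in $\tau$ with differentiation under the integral allowed, all integrals appearing are finite, and integrations by parts over $\mathbb R$ produce no boundary terms ($\rho,\zeta\to1$ at $\pm\infty$ with sufficient decay). Relative densities $\rho=u/U$, $\zeta=v/V$. Entropy functions: $F_p(z)=\frac{1}{p(p-1)}(z^p-pz+p-1)$ for $p\notin\{0,1\}$, $F_1(z)=z\log z-z+1$, $F_0(z)=z-\log z-1$. Relative entropy $\mathcal E_p(\mathbf u|\mathbf U)=\int_{\mathbb R}\big(UF_p(\rho)+VF_p(\zeta)\big)\mathrm dy$. *)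

(* Defs.v *)
From Stdlib Require Import Reals Lra.
From Coquelicot Require Import Coquelicot.
Open Scope R_scope.

Definition Fent (p z : R) : R :=
  if Req_EM_T p 1 then z * ln z - z + 1
  else if Req_EM_T p 0 then z - ln z - 1
  else / (p * (p - 1)) * (Rpower z p - p * z + p - 1).

Definition intR (f : R -> R) : R :=
  RInt_gen f (Rbar_locally m_infty) (Rbar_locally p_infty).
Definition integrableR (f : R -> R) : Prop :=
  ex_RInt_gen f (Rbar_locally m_infty) (Rbar_locally p_infty).

Definition is_profile (d1 d2 alpha beta Am Ap : R) (U V Lam : R -> R) : Prop :=
  (exists c C, 0 < c /\ forall y, c <= U y <= C /\ c <= V y <= C) /\
  (forall y, ex_derive U y /\ ex_derive (Derive U) y /\
             continuous (Derive (Derive U)) y) /\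
  (forall y, ex_derive V y /\ ex_derive (Derive V) y /\
             continuous (Derive (Derive V)) y) /\
  (forall y, d1 * Derive (Derive U) y + y / 2 * Derive U y + alpha * Lam y = 0) /\
  (forall y, d2 * Derive (Derive V) y + y / 2 * Derive V y - beta * Lam y = 0) /\
  (forall y, Rpower (U y) alpha = Rpower (V y) beta) /\
  is_lim U m_infty (Rpower Am beta) /\ is_lim U p_infty (Rpower Ap beta) /\
  is_lim V m_infty (Rpower Am alpha) /\ is_lim V p_infty (Rpower Ap alpha).

Definition is_classical_solution (d1 d2 k alpha beta Am Ap : R)
    (u v : R -> R -> R) : Prop :=
  forall t, 0 < t ->
  (forall y, 0 < u t y /\ 0 < v t y) /\
  (forall y, ex_derive (fun s => u s y) t /\ ex_derive (fun z => u t z) y /\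
             ex_derive (Derive (fun z => u t z)) y /\
             ex_derive (fun s => v s y) t /\ ex_derive (fun z => v t z) y /\
             ex_derive (Derive (fun z => v t z)) y) /\
  (forall y,
     continuous (fun q : R * R => u (fst q) (snd q)) (t, y) /\
     continuous (fun q : R * R => Derive (fun s => u s (snd q)) (fst q)) (t, y) /\
     continuous (fun q : R * R => Derive (fun z => u (fst q) z) (snd q)) (t, y) /\
     continuous (fun q : R * R =>
                   Derive (Derive (fun z => u (fst q) z)) (snd q)) (t, y) /\
     continuous (fun q : R * R => v (fst q) (snd q)) (t, y) /\
     continuous (fun q : R * R => Derive (fun s => v s (snd q)) (fst q)) (t, y) /\
     continuous (fun q : R * R => Derive (fun z => v (fst q) z) (snd q)) (t, y) /\
     continuous (fun q : R * R =>
                   Derive (Derive (fun z => v (fst q) z)) (snd q)) (t, y)) /\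
  (forall y,
     Derive (fun s => u s y) t =
       d1 * Derive (Derive (fun z => u t z)) y + y / 2 * Derive (fun z => u t z) y
       + exp t * alpha * k * (Rpower (v t y) beta - Rpower (u t y) alpha)) /\
  (forall y,
     Derive (fun s => v s y) t =
       d2 * Derive (Derive (fun z => v t z)) y + y / 2 * Derive (fun z => v t z) y
       - exp t * beta * k * (Rpower (v t y) beta - Rpower (u t y) alpha)) /\
  is_lim (fun y => u t y) m_infty (Rpower Am beta) /\
  is_lim (fun y => u t y) p_infty (Rpower Ap beta) /\
  is_lim (fun y => v t y) m_infty (Rpower Am alpha) /\
  is_lim (fun y => v t y) p_infty (Rpower Ap alpha).

Definition ent_density (p : R) (U V : R -> R) (u v : R -> R -> R) (t y : R) : R :=
  U y * Fent p (u t y / U y) + V y * Fent p (v t y / V y).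

Definition rel_entropy (p : R) (U V : R -> R) (u v : R -> R -> R) (t : R) : R :=
  intR (ent_density p U V u v t).

Definition fisher_density (p d1 d2 : R) (U V : R -> R) (u v : R -> R -> R)
    (t y : R) : R :=
  d1 * U y * Rpower (u t y / U y) (p - 2) * (Derive (fun z => u t z / U z) y) ^ 2
  + d2 * V y * Rpower (v t y / V y) (p - 2) * (Derive (fun z => v t z / V z) y) ^ 2.

Definition lambda_density (p alpha : R) (U V Lam : R -> R) (u v : R -> R -> R)
    (t y : R) : R :=
  / p * (Rpower (v t y / V y) p - Rpower (u t y / U y) p) * alpha * Lam y.

Definition react_density (p k alpha : R) (U V : R -> R) (u v : R -> R -> R)
    (t y : R) : R :=
  k * Rpower (U y) alpha * (alpha / (p - 1))
  * (Rpower (v t y / V y) (p - 1) - Rpower (u t y / U y) (p - 1))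
  * (Rpower (v t y / V y) alpha - Rpower (u t y / U y) alpha).

Definition I_Fisher p d1 d2 U V u v t := intR (fisher_density p d1 d2 U V u v t).
Definition I_Lambda p alpha U V Lam u v t := intR (lambda_density p alpha U V Lam u v t).
Definition D_react p k alpha U V u v t := intR (react_density p k alpha U V u v t).

Definition D_total p d1 d2 k alpha U V Lam u v t :=
  I_Fisher p d1 d2 U V u v t + / 2 * rel_entropy p U V u v t
  - I_Lambda p alpha U V Lam u v t + exp t * D_react p k alpha U V u v t.

(** The technical requirements in the notion of "solution": finiteness of
    all integrals, differentiability of the entropy with differentiation
    under the integral sign, and vanishing of the boundary terms produced
    by integrating by parts over R. *)
Definition solution_technical (p d1 d2 k alpha : R) (U V Lam : R -> R)
    (u v : R -> R -> R) : Prop :=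
  forall t, 0 < t ->
  integrableR (ent_density p U V u v t) /\
  integrableR (fun y => Derive (fun s => ent_density p U V u v s y) t) /\
  integrableR (fisher_density p d1 d2 U V u v t) /\
  integrableR (lambda_density p alpha U V Lam u v t) /\
  integrableR (react_density p k alpha U V u v t) /\
  is_derive (rel_entropy p U V u v) t
    (intR (fun y => Derive (fun s => ent_density p U V u v s y) t)) /\
  (forall l : Rbar, (l = m_infty \/ l = p_infty) ->
     is_lim (fun y => d1 * U y * Derive (fun z => u t z / U z) y
                      * Derive (Fent p) (u t y / U y)) l 0 /\
     is_lim (fun y => (d1 * Derive U y + y / 2 * U y) * Fent p (u t y / U y)) l 0 /\
     is_lim (fun y => d2 * V y * Derive (fun z => v t z / V z) y
                      * Derive (Fent p) (v t y / V y)) l 0 /\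
     is_lim (fun y => (d2 * Derive V y + y / 2 * V y) * Fent p (v t y / V y)) l 0).

(* Main.v *)
Require Import Defs.
From Stdlib Require Import Reals Lra FunctionalExtensionality.
From Coquelicot Require Import Coquelicot.
Open Scope R_scope.

Lemma Fent_eq p x : p <> 0 -> p <> 1 ->
  Fent p x = / (p * (p - 1)) * (Rpower x p - p * x + p - 1).
Proof.
  intros H0 H1. unfold Fent.
  destruct (Req_EM_T p 1); [contradiction|].
  destruct (Req_EM_T p 0); [contradiction|]. reflexivity.
Qed.

Lemma Rpower_m1 x q : 0 < x -> Rpower x (q - 1) = Rpower x q / x.
Proof.
  intros Hx. replace q with ((q - 1) + 1) at 2 by ring.
  rewrite Rpower_plus, Rpower_1 by lra. field. lra.
Qed.

Lemma exp_m1 x q : 0 < x -> exp ((q - 1) * ln x) = exp (q * ln x) / x.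
Proof. intros. apply (Rpower_m1 x q H). Qed.

Lemma exp_m2 x q : 0 < x -> exp ((q - 2) * ln x) = exp (q * ln x) / x / x.
Proof. intros. replace (q - 2) with ((q - 1) - 1) by ring.
  rewrite exp_m1, exp_m1; auto. Qed.

Lemma Derive_Fent p x : p <> 0 -> p <> 1 -> 0 < x ->
  Derive (Fent p) x = (Rpower x (p - 1) - 1) / (p - 1).
Proof.
  intros H0 H1 Hx.
  rewrite (Derive_ext _ (fun x => / (p * (p - 1)) * (exp (p * ln x) - p * x + p - 1)))
    by (intros; rewrite Fent_eq; auto).
  apply is_derive_unique. auto_derive.
  - repeat split; auto.
  - unfold Rpower. rewrite exp_m1 by auto. field. repeat split; lra.
Qed.

Lemma Derive_quot (f g : R -> R) (z : R) : ex_derive f z -> ex_derive g z -> g z <> 0 ->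
  Derive (fun w => f w / g w) z = (Derive f z * g z - f z * Derive g z) / (g z)^2.
Proof.
  intros Hf Hg Hz. apply is_derive_unique. auto_derive.
  - repeat split; auto.
  - change (fun x : R => f x) with f; change (fun x : R => g x) with g.
    field. auto.
Qed.

Definition Bc d p (f g : R -> R) z := d * g z * Derive (fun w => f w / g w) z * Derive (Fent p) (f z / g z)
  + (d * Derive g z + z / 2 * g z) * Fent p (f z / g z).
Definition Ec d p (f g : R -> R) z :=
  (Rpower (f z / g z) (p - 1) - 1) / (p - 1) * (d * Derive (Derive f) z + z / 2 * Derive f z)
  + (d * Derive (Derive g) z + z / 2 * Derive g z) * (/ p * (1 - Rpower (f z / g z) p))
  + d * g z * Rpower (f z / g z) (p - 2) * (Derive (fun w => f w / g w) z) ^ 2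
  + / 2 * (g z * Fent p (f z / g z)).

Lemma comp_deriv d p (f g : R -> R) z : p <> 0 -> p <> 1 ->
  (forall w, ex_derive f w /\ ex_derive (Derive f) w /\ ex_derive g w /\
    ex_derive (Derive g) w /\ 0 < f w /\ 0 < g w) ->
  is_derive (Bc d p f g) z (Ec d p f g z).
Proof.
  intros Hp0 Hp1 H.
  apply (is_derive_ext (fun w => d * g w * ((Derive f w * g w - f w * Derive g w) / (g w)^2)
     * ((exp ((p - 1) * ln (f w / g w)) - 1) / (p - 1))
     + (d * Derive g w + w / 2 * g w) * (/ (p * (p - 1)) * (exp (p * ln (f w / g w)) - p * (f w / g w) + p - 1)))).
  { intros w. destruct (H w) as (H1&H2&H3&H4&H5&H6). unfold Bc.
    rewrite Derive_quot by (auto; lra). rewrite Derive_Fent, Fent_eq; auto.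
    apply Rdiv_lt_0_compat; auto. }
  destruct (H z) as (H1&H2&H3&H4&H5&H6).
  unfold Ec. rewrite Derive_quot by (auto; lra). rewrite Fent_eq by auto. unfold Rpower.
  auto_derive.
  - assert (0 < f z / g z) by (apply Rdiv_lt_0_compat; auto).
    repeat split; auto; try (apply Rgt_not_eq; nra).
  - change (fun x : R => f x) with f; change (fun x : R => g x) with g;
    change (fun x : R => Derive f x) with (Derive f); change (fun x : R => Derive g x) with (Derive g).
    assert (HX : 0 < f z / g z) by (apply Rdiv_lt_0_compat; auto).
    change (f z * / g z) with (f z / g z).
    rewrite !exp_m1, !exp_m2 by auto.
    set (r := exp (p * ln (f z / g z))).
    field. repeat split; lra.
Qed.

Lemma cR_plus (f g : R -> R) x : continuous f x -> continuous g x -> continuous (fun y => f y + g y) x.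
Proof. intros. apply (continuous_plus f g); auto. Qed.
Lemma cR_minus (f g : R -> R) x : continuous f x -> continuous g x -> continuous (fun y => f y - g y) x.
Proof. intros. apply (continuous_minus f g); auto. Qed.
Lemma cR_mult (f g : R -> R) x : continuous f x -> continuous g x -> continuous (fun y => f y * g y) x.
Proof. intros. apply (continuous_mult f g); auto. Qed.
Lemma cR_inv (f : R -> R) x : continuous f x -> f x <> 0 -> continuous (fun y => / f y) x.
Proof. intros. apply (continuous_Rinv_comp f); auto. Qed.
Lemma cR_div (f g : R -> R) x : continuous f x -> continuous g x -> g x <> 0 -> continuous (fun y => f y / g y) x.
Proof. intros. apply cR_mult; auto. apply cR_inv; auto. Qed.
Lemma cR_pow (f : R -> R) n x : continuous f x -> continuous (fun y => f y ^ n) x.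
Proof. intros. induction n; simpl. apply continuous_const. apply cR_mult; auto. Qed.
Lemma cR_const (c x : R) : continuous (fun _ : R => c) x.
Proof. apply continuous_const. Qed.
Lemma cR_id (x : R) : continuous (fun y : R => y) x.
Proof. apply continuous_id. Qed.
Lemma cR_Rpower (f : R -> R) q x : continuous f x -> 0 < f x -> continuous (fun y => Rpower (f y) q) x.
Proof.
  intros Hf Hp. apply (continuous_comp f (fun z => Rpower z q)); auto.
  apply (ex_derive_continuous (K := R_AbsRing) (V := R_NormedModule) (fun z => Rpower z q)). exists (q * Rpower (f x) (q - 1)).
  apply is_derive_Reals. apply derivable_pt_lim_power. auto.
Qed.

Lemma cR_der (f : R -> R) x : ex_derive f x -> continuous f x.
Proof. intros. apply (ex_derive_continuous (K := R_AbsRing) (V := R_NormedModule) f). auto. Qed.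

Ltac cont := repeat match goal with
  | |- continuous (fun _ => ?c) _ => apply cR_const
  | |- continuous (fun y => y) _ => apply cR_id
  | |- continuous (fun y => @?a y + @?b y) _ => apply (cR_plus a b)
  | |- continuous (fun y => @?a y - @?b y) _ => apply (cR_minus a b)
  | |- continuous (fun y => @?a y * @?b y) _ => apply (cR_mult a b)
  | |- continuous (fun y => @?a y / @?b y) _ => apply (cR_div a b)
  | |- continuous (fun y => / @?a y) _ => apply (cR_inv a)
  | |- continuous (fun y => @?a y ^ _) _ => apply (cR_pow a)
  | |- continuous (fun y => Rpower (@?a y) _) _ => apply (cR_Rpower a)
  end.

Lemma comp_cont d p (f g : R -> R) z : p <> 0 -> p <> 1 ->
  (forall w, ex_derive f w /\ ex_derive (Derive f) w /\ ex_derive g w /\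
    ex_derive (Derive g) w /\ 0 < f w /\ 0 < g w) ->
  continuous (Derive (Derive f)) z -> continuous (Derive (Derive g)) z ->
  continuous (Ec d p f g) z.
Proof.
  intros Hp0 Hp1 H Cf Cg.
  apply (continuous_ext (fun z => (Rpower (f z / g z) (p - 1) - 1) / (p - 1) * (d * Derive (Derive f) z + z / 2 * Derive f z)
  + (d * Derive (Derive g) z + z / 2 * Derive g z) * (/ p * (1 - Rpower (f z / g z) p))
  + d * g z * Rpower (f z / g z) (p - 2) * ((Derive f z * g z - f z * Derive g z) / (g z)^2) ^ 2
  + / 2 * (g z * (/ (p * (p - 1)) * (Rpower (f z / g z) p - p * (f z / g z) + p - 1))))).
  { intros w. destruct (H w) as (H1&H2&H3&H4&H5&H6). unfold Ec.
    rewrite Derive_quot by (auto; lra). rewrite Fent_eq by auto. reflexivity. }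
  destruct (H z) as (H1&H2&H3&H4&H5&H6).
  assert (Cf0 : continuous f z) by (apply cR_der; auto).
  assert (Cf1 : continuous (Derive f) z) by (apply cR_der; auto).
  assert (Cg0 : continuous g z) by (apply cR_der; auto).
  assert (Cg1 : continuous (Derive g) z) by (apply cR_der; auto).
  assert (0 < f z / g z) by (apply Rdiv_lt_0_compat; auto).
  cont; auto; try lra; try (apply Rgt_not_eq; apply pow_lt; lra).
Qed.

Lemma Rpower_mono q x y : 0 < x -> 0 < y -> 0 <= q * (Rpower x q - Rpower y q) * (x - y).
Proof.
  intros Hx Hy. unfold Rpower.
  destruct (Rtotal_order x y) as [Hxy|[Hxy|Hxy]].
  - pose proof (ln_increasing x y Hx Hxy).
    destruct (Rtotal_order q 0) as [Hq|[Hq|Hq]].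
    + assert (exp (q * ln y) < exp (q * ln x)) by (apply exp_increasing; clear -Hq H; nra). assert (0 < -q * (exp (q*ln x) - exp(q*ln y))) by nra. nra.
    + subst. lra.
    + assert (exp (q * ln x) < exp (q * ln y)) by (apply exp_increasing; clear -Hq H; nra). assert (0 < q * (exp (q*ln x) - exp(q*ln y)) \/ 0 < -q * (exp (q*ln x) - exp(q*ln y))) by (clear -Hq H0; nra). nra.
  - subst. lra.
  - pose proof (ln_increasing y x Hy Hxy).
    destruct (Rtotal_order q 0) as [Hq|[Hq|Hq]].
    + assert (exp (q * ln x) < exp (q * ln y)) by (apply exp_increasing; clear -Hq H; nra). assert (0 < q * (exp (q*ln x) - exp(q*ln y)) \/ 0 < -q * (exp (q*ln x) - exp(q*ln y))) by (clear -Hq H0; nra). nra.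
    + subst. lra.
    + assert (exp (q * ln y) < exp (q * ln x)) by (apply exp_increasing; clear -Hq H; nra). assert (0 < q * (exp (q*ln x) - exp(q*ln y)) \/ 0 < -q * (exp (q*ln x) - exp(q*ln y))) by (clear -Hq H0; nra). nra.
Qed.

Lemma react_nonneg k alpha p A x y : 0 < k -> 1 <= alpha -> p <> 1 -> 0 < A -> 0 < x -> 0 < y ->
  0 <= k * A * (alpha / (p - 1)) * (Rpower x (p - 1) - Rpower y (p - 1)) * (Rpower x alpha - Rpower y alpha).
Proof.
  intros Hk Ha Hp HA Hx Hy.
  pose proof (Rpower_mono (p - 1) x y Hx Hy) as H1.
  pose proof (Rpower_mono alpha x y Hx Hy) as H2.
  set (P := Rpower x (p - 1) - Rpower y (p - 1)) in *.
  set (Q := Rpower x alpha - Rpower y alpha) in *.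
  assert (Hpos : 0 <= P * Q / (p - 1)).
  { destruct (Rtotal_order x y) as [Hxy|[Hxy|Hxy]].
    - assert (0 <= - ((p-1) * P)).
      { destruct (Rle_dec ((p-1)*P) 0); [lra|]. exfalso.
        assert (0 < (p-1)*P*(y-x)) by (apply Rmult_lt_0_compat; lra). lra. }
      assert (Q <= 0).
      { destruct (Rle_dec Q 0); [lra|]. exfalso.
        assert (0 < alpha*Q*(y-x)) by (repeat apply Rmult_lt_0_compat; lra). lra. }
      assert (P * Q / (p - 1) = (- ((p-1) * P)) * (- Q) / ((p-1)*(p-1))) by (field; lra).
      rewrite H3. apply Rmult_le_pos. nra. left. apply Rinv_0_lt_compat.
      assert (p - 1 <> 0) by lra. nra.
    - subst. unfold P. lra.
    - assert (0 <= ((p-1) * P)).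
      { destruct (Rle_dec 0 ((p-1)*P)); [lra|]. exfalso.
        assert (0 < -((p-1)*P)*(x-y)) by (apply Rmult_lt_0_compat; lra). lra. }
      assert (0 <= Q).
      { destruct (Rle_dec 0 Q); [lra|]. exfalso.
        assert (0 < alpha*(-Q)*(x-y)) by (repeat apply Rmult_lt_0_compat; lra). lra. }
      assert (P * Q / (p - 1) = ((p-1) * P) * Q / ((p-1)*(p-1))) by (field; lra).
      rewrite H3. apply Rmult_le_pos. nra. left. apply Rinv_0_lt_compat.
      assert (p - 1 <> 0) by lra. nra. }
  replace (k * A * (alpha / (p - 1)) * P * Q) with ((k * A * alpha) * (P * Q / (p - 1))) by (field; lra).
  apply Rmult_le_pos; auto. left. repeat apply Rmult_lt_0_compat; lra.
Qed.

Lemma intR_nonneg (f : R -> R) : integrableR f -> (forall x, 0 <= f x) -> 0 <= intR f.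
Proof.
  intros Hi Hf.
  pose proof (RInt_gen_correct f Hi) as H.
  assert (H0 : is_RInt_gen (fun _ : R => 0) (Rbar_locally m_infty) (Rbar_locally p_infty) 0).
  { pose proof (is_RInt_gen_scal (V:=R_NormedModule) f 0 _ H) as H2.
    unfold scal in H2; simpl in H2; unfold mult in H2; simpl in H2.
    rewrite Rmult_0_l in H2. eapply is_RInt_gen_ext; [|exact H2].
    apply filter_forall. intros ab x _. apply Rmult_0_l. }
  unfold intR.
  apply (RInt_gen_norm (Fa := Rbar_locally m_infty) (Fb := Rbar_locally p_infty) (fun _ : R => 0) f 0 (RInt_gen f (Rbar_locally m_infty) (Rbar_locally p_infty))) in H0; auto.
  - eapply Rle_trans; [|exact H0]. apply norm_ge_0.
  - exists (fun x => x < 0) (fun y => 0 < y).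
    + exists 0. auto.
    + exists 0. auto.
    + simpl. intros; lra.
  - apply filter_forall. intros ab x _. eapply Rle_trans; [|apply (Hf x)]. unfold norm; simpl; unfold abs; simpl. rewrite Rabs_R0. lra.
Qed.

Lemma dent_deriv p (U V : R -> R) (u v : R -> R -> R) t z : p <> 0 -> p <> 1 ->
  0 < U z -> 0 < V z -> 0 < u t z -> 0 < v t z ->
  ex_derive (fun s => u s z) t -> ex_derive (fun s => v s z) t ->
  Derive (fun s => ent_density p U V u v s z) t =
  (Rpower (u t z / U z) (p - 1) - 1) / (p - 1) * Derive (fun s => u s z) t
  + (Rpower (v t z / V z) (p - 1) - 1) / (p - 1) * Derive (fun s => v s z) t.
Proof.
  intros Hp0 Hp1 HU HV Hu Hv Du Dv.
  unfold ent_density.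
  rewrite (Derive_ext _ (fun s => U z * (/ (p * (p - 1)) * (exp (p * ln (u s z / U z)) - p * (u s z / U z) + p - 1))
     + V z * (/ (p * (p - 1)) * (exp (p * ln (v s z / V z)) - p * (v s z / V z) + p - 1))))
    by (intros; rewrite !Fent_eq; auto).
  assert (0 < u t z / U z) by (apply Rdiv_lt_0_compat; auto).
  assert (0 < v t z / V z) by (apply Rdiv_lt_0_compat; auto).
  apply is_derive_unique. auto_derive.
  - repeat split; auto.
  - change (u t z * / U z) with (u t z / U z). change (v t z * / V z) with (v t z / V z).
    unfold Rpower. rewrite !exp_m1 by auto. field. repeat split; lra.
Qed.

Notation FM := (Rbar_locally m_infty).
Notation FP := (Rbar_locally p_infty).

Lemma iplus (f g : R -> R) a b : is_RInt_gen f FM FP a -> is_RInt_gen g FM FP b ->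
  is_RInt_gen (fun x => f x + g x) FM FP (a + b).
Proof. intros. exact (is_RInt_gen_plus f g a b H H0). Qed.
Lemma iminus (f g : R -> R) a b : is_RInt_gen f FM FP a -> is_RInt_gen g FM FP b ->
  is_RInt_gen (fun x => f x - g x) FM FP (a - b).
Proof. intros. exact (is_RInt_gen_minus f g a b H H0). Qed.
Lemma iscal (f : R -> R) c a : is_RInt_gen f FM FP a ->
  is_RInt_gen (fun x => c * f x) FM FP (c * a).
Proof. intros. exact (is_RInt_gen_scal f c a H). Qed.
Lemma icorr (f : R -> R) : integrableR f -> is_RInt_gen f FM FP (intR f).
Proof. intros. unfold intR. apply (RInt_gen_correct (V := R_CompleteNormedModule)). exact H. Qed.
Lemma iuniq (f : R -> R) a : is_RInt_gen f FM FP a -> intR f = a.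
Proof. intros. unfold intR. apply (is_RInt_gen_unique (V := R_CompleteNormedModule)). exact H. Qed.

Lemma cont_slice (F : R -> R -> R) t y :
  continuous (fun q : R * R => F (fst q) (snd q)) (t, y) -> continuous (F t) y.
Proof.
  intros H. apply (continuous_comp_2 (fun _ : R => t) (fun y : R => y) F).
  - apply continuous_const.
  - apply continuous_id.
  - exact H.
Qed.

Theorem mainTheorem3 (d1 d2 k alpha beta Am Ap p : R) (U V Lam : R -> R)
    (u v : R -> R -> R) :
  0 < d1 -> 0 < d2 -> 0 < k -> 0 < Am -> 0 < Ap ->
  alpha = beta -> 1 <= alpha -> p <> 0 -> p <> 1 ->
  is_profile d1 d2 alpha beta Am Ap U V Lam ->
  is_classical_solution d1 d2 k alpha beta Am Ap u v ->
  solution_technical p d1 d2 k alpha U V Lam u v ->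
  forall t, 0 < t ->
    is_derive (rel_entropy p U V u v) t (- D_total p d1 d2 k alpha U V Lam u v t) /\
    0 <= D_react p k alpha U V u v t /\
    0 <= I_Fisher p d1 d2 U V u v t.
Proof.
  intros Hd1 Hd2 Hk HAm HAp Hab Ha Hp0 Hp1 Hprof Hsol Htech t Ht.
  subst beta.
  destruct Hprof as ([c [C [Hc HcU]]] & HU2 & HV2 & HeqU & HeqV & HUV & _).
  destruct (Hsol t Ht) as (Hpos & Hder & Hcont & Hpu & Hpv & _).
  destruct (Htech t Ht) as (Ient & IDent & Ifish & Ilam & Irea & Hderiv & Hbd).
  assert (PU : forall y, 0 < U y) by (intros y; destruct (HcU y); lra).
  assert (PV : forall y, 0 < V y) by (intros y; destruct (HcU y); lra).
  assert (HA : forall w, ex_derive (fun z => u t z) w /\ ex_derive (Derive (fun z => u t z)) w /\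
      ex_derive U w /\ ex_derive (Derive U) w /\ 0 < u t w /\ 0 < U w).
  { intros w. destruct (Hder w) as (?&?&?&?&?&?). destruct (HU2 w) as (?&?&?).
    destruct (Hpos w). repeat split; auto. }
  assert (HB : forall w, ex_derive (fun z => v t z) w /\ ex_derive (Derive (fun z => v t z)) w /\
      ex_derive V w /\ ex_derive (Derive V) w /\ 0 < v t w /\ 0 < V w).
  { intros w. destruct (Hder w) as (?&?&?&?&?&?). destruct (HV2 w) as (?&?&?).
    destruct (Hpos w). repeat split; auto. }
  set (B := fun z => Bc d1 p (fun w => u t w) U z + Bc d2 p (fun w => v t w) V z).
  assert (HBd : forall z, is_derive B z (Ec d1 p (fun w => u t w) U z + Ec d2 p (fun w => v t w) V z)).
  { intros z. apply (is_derive_plus (Bc d1 p (fun w => u t w) U) (Bc d2 p (fun w => v t w) V));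
      apply comp_deriv; auto. }
  assert (HDB : Derive B = fun z => Ec d1 p (fun w => u t w) U z + Ec d2 p (fun w => v t w) V z).
  { apply functional_extensionality. intros z. apply is_derive_unique. apply HBd. }
  assert (HInt : is_RInt_gen (Derive B) FM FP (0 - 0)).
  { apply is_RInt_gen_Derive.
    - apply filter_forall. intros ab x _. eexists. apply HBd.
    - apply filter_forall. intros ab x _. rewrite HDB.
      apply cR_plus; apply comp_cont; auto.
      + destruct (Hcont x) as (_&_&_&Hc4&_).
        exact (cont_slice (fun s z => Derive (Derive (fun w => u s w)) z) t x Hc4).
      + destruct (HU2 x) as (_&_&Hc4). exact Hc4.
      + destruct (Hcont x) as (_&_&_&_&_&_&_&Hc4).
        exact (cont_slice (fun s z => Derive (Derive (fun w => v s w)) z) t x Hc4).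
      + destruct (HV2 x) as (_&_&Hc4). exact Hc4.
    - destruct (Hbd m_infty (or_introl eq_refl)) as (L1&L2&L3&L4).
      pose proof (is_lim_plus' _ _ _ _ _ (is_lim_plus' _ _ _ _ _ L1 L2) (is_lim_plus' _ _ _ _ _ L3 L4)) as L.
      replace (0 + 0 + (0 + 0)) with 0 in L by ring. exact L.
    - destruct (Hbd p_infty (or_intror eq_refl)) as (L1&L2&L3&L4).
      pose proof (is_lim_plus' _ _ _ _ _ (is_lim_plus' _ _ _ _ _ L1 L2) (is_lim_plus' _ _ _ _ _ L3 L4)) as L.
      replace (0 + 0 + (0 + 0)) with 0 in L by ring. exact L. }
  assert (HG : forall z, Ec d1 p (fun w => u t w) U z + Ec d2 p (fun w => v t w) V z =
    Derive (fun s => ent_density p U V u v s z) t + fisher_density p d1 d2 U V u v t z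
    + / 2 * ent_density p U V u v t z - lambda_density p alpha U V Lam u v t z
    + exp t * react_density p k alpha U V u v t z).
  { intros z. destruct (Hder z) as (Du&_&_&Dv&_&_). destruct (Hpos z) as (Pu&Pv).
    specialize (PU z); specialize (PV z).
    rewrite dent_deriv by auto.
    rewrite (Hpu z), (Hpv z).
    assert (E1 : Derive (Derive U) z = (- (z / 2 * Derive U z) - alpha * Lam z) / d1).
    { specialize (HeqU z). apply (Rmult_eq_reg_l d1); [|lra].
      replace (d1 * Derive (Derive U) z) with (- (z / 2 * Derive U z) - alpha * Lam z) by lra. field. lra. }
    assert (E2 : Derive (Derive V) z = (- (z / 2 * Derive V z) + alpha * Lam z) / d2).
    { specialize (HeqV z). apply (Rmult_eq_reg_l d2); [|lra].
      replace (d2 * Derive (Derive V) z) with (- (z / 2 * Derive V z) + alpha * Lam z) by lra. field. lra. }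
    assert (E3 : Rpower (u t z) alpha = Rpower (U z) alpha * Rpower (u t z / U z) alpha).
    { rewrite Rpower_mult_distr. f_equal. field. lra. auto. apply Rdiv_lt_0_compat; auto. }
    assert (E4 : Rpower (v t z) alpha = Rpower (U z) alpha * Rpower (v t z / V z) alpha).
    { rewrite HUV, Rpower_mult_distr. f_equal. field. lra. auto. apply Rdiv_lt_0_compat; auto. }
    unfold Ec, fisher_density, ent_density, lambda_density, react_density.
    rewrite E1, E2, E3, E4.
    field. repeat split; lra. }
  pose proof (iminus _ _ _ _ (iplus _ _ _ _ (iminus _ _ _ _ (iminus _ _ _ _ HInt (icorr _ Ifish))
     (iscal _ (/ 2) _ (icorr _ Ient))) (icorr _ Ilam)) (iscal _ (exp t) _ (icorr _ Irea))) as J.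
  assert (EF : (fun x => Derive B x - fisher_density p d1 d2 U V u v t x - / 2 * ent_density p U V u v t x
      + lambda_density p alpha U V Lam u v t x - exp t * react_density p k alpha U V u v t x)
      = (fun y => Derive (fun s => ent_density p U V u v s y) t)).
  { apply functional_extensionality. intros x. rewrite HDB, HG. ring. }
  cbv beta in J. rewrite EF in J. apply iuniq in J.
  split; [|split].
  - rewrite J in Hderiv. unfold D_total, I_Fisher, I_Lambda, D_react.
    replace (- (intR (fisher_density p d1 d2 U V u v t) + / 2 * rel_entropy p U V u v t -
      intR (lambda_density p alpha U V Lam u v t) + exp t * intR (react_density p k alpha U V u v t)))
      with (0 - 0 - intR (fisher_density p d1 d2 U V u v t) - / 2 * intR (ent_density p U V u v t) +
      intR (lambda_density p alpha U V Lam u v t) - exp t * intR (react_density p k alpha U V u v t)).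
    exact Hderiv. unfold rel_entropy. ring.
  - apply intR_nonneg; auto. intros y. unfold react_density.
    destruct (Hpos y). apply react_nonneg; auto.
    + apply exp_pos.
    + apply Rdiv_lt_0_compat; auto.
    + apply Rdiv_lt_0_compat; auto.
  - apply intR_nonneg; auto. intros y. unfold fisher_density.
    assert (0 <= d1 * U y * Rpower (u t y / U y) (p - 2) * (Derive (fun z => u t z / U z) y) ^ 2).
    { apply Rmult_le_pos. left. apply Rmult_lt_0_compat. apply Rmult_lt_0_compat; auto. apply exp_pos.
      apply pow2_ge_0. }
    assert (0 <= d2 * V y * Rpower (v t y / V y) (p - 2) * (Derive (fun z => v t z / V z) y) ^ 2).
    { apply Rmult_le_pos. left. apply Rmult_lt_0_compat. apply Rmult_lt_0_compat; auto. apply exp_pos.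
      apply pow2_ge_0. }
    lra.
Qed.
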